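(* Let $0<r\le 1/2$, let $H$ be an $r$-skew LKS-graph on $n$ vertices with parameters $(k,\eta,\varepsilon,d)$ (with $k,\eta,d$ arbitrary), and let $\mathbf H$ be its cluster graph. Then: (1) If $C$ is an $L$-cluster and $D$ is an $S$-cluster of $\mathbf H$, then $|C|\le n/|V(\mathbf H)|$ and $|D|\le \frac{n}{r|V(\mathbf H)|}$. (2) If $v\in V(H)$ is an ultratypical vertex, $C$ is the cluster of $\mathbf H$ containing $v$, and $\mathcal S\subseteq V(\mathbf H)$ is any set of clusters, then $\deg(v,\bigcup\mathcal S)\ge \overline{\deg}(C,\mathcal S)-2\sqrt{\varepsilon}\,n/r$.
   Context: For disjoint vertex sets $X,Y$, $d(X,Y)=|E(X,Y)|/(|X||Y|)$ is the density, and $(X,Y)$ is $\varepsilon$-regular if $|d(X',Y')-d(X,Y)|\le\varepsilon$ for all $X'\subseteq X$, $Y'\subseteq Y$ with $|X'|\ge\varepsilon|X|$, $|Y'|\ge\varepsilon|Y|$. For $r\le 1/2$, a graph $H$ is an $r$-skew LKS-graph with parameters $(k,\eta,\varepsilon,d)$ if there is a partition $\{L_1,\dots,L_{m_L},S_1,\dots,S_{m_S}\}$ of $V(H)$ such that: (i) $m_L\ge(1+\eta)m_S$; (ii) all $L_i$ have the same size and all $S_j$ have the same size; (iii) $r|S_j|=(1-r)|L_i|$ for all $i,j$; (iv) each pair $(L_i,L_j)$ ($i\ne j$) and each pair $(L_i,S_j)$ is $\varepsilon$-regular of density either $0$ or at least $d$; (v) there are no edges inside any of the sets and no edges between $S_i$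 and $S_j$ for $i\ne j$; (vi) the average degree of the vertices of each $L_i$ is at least $(1+\eta)k$. The sets $L_i$ are $L$-clusters, the sets $S_j$ are $S$-clusters. The cluster graph $\mathbf H$ has vertex set $\{L_1,\dots,L_{m_L},S_1,\dots,S_{m_S}\}$ (the clusters), with an edge between two clusters whenever the corresponding pair has positive density in $H$. For $v\in V(H)$ and $Z\subseteq V(H)$, $\deg(v,Z)$ is the number of neighbours of $v$ in $Z$. For a set $\mathcal S$ of clusters, $\bigcup\mathcal S$ is the union of its clusters, and for a cluster $A$, $\overline{\deg}(A,\mathcal S)$ is the average of $\deg(a,\bigcup\mathcal S)$ over $a\in A$. A vertex $x$ of a cluster $X$ is typical with respect to a cluster $Y$ if $\deg(x,Y)\ge (d(X,Y)-\varepsilon)|Y|$; $x$ is ultratypical if it is typical with respect to all but at most $\sqrt{\varepsilon}\,|V(\mathbf H)|$ clusters $Y\ne X$. *)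

(* Defs.v *)
From HB Require Import structures.
From mathcomp Require Import all_boot all_order all_algebra.
Set Implicit Arguments. Unset Strict Implicit. Unset Printing Implicit Defensive.
Import Order.TTheory GRing.Theory Num.Theory.
Local Open Scope ring_scope.

Section LKS.
Variable R : rcfType.
Variable V : finType.
Variable e : rel V.

Definition deg (v : V) (Z : {set V}) : nat := #|[set y in Z | e v y]|.

Definition nedges (X Y : {set V}) : nat :=
  #|[set p : V * V | [&& p.1 \in X, p.2 \in Y & e p.1 p.2]]|.

Definition density (X Y : {set V}) : R :=
  (nedges X Y)%:R / ((#|X| * #|Y|)%N)%:R.

Definition eps_regular (eps : R) (X Y : {set V}) : Prop :=
  forall X' Y' : {set V}, X' \subset X -> Y' \subset Y ->
    eps * #|X|%:R <= #|X'|%:R -> eps * #|Y|%:R <= #|Y'|%:R ->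
    `|density X' Y' - density X Y| <= eps.

Definition avgdeg (A Z : {set V}) : R :=
  (\sum_(a in A) deg a Z)%:R / #|A|%:R.

Variables (mL mS : nat) (L : 'I_mL -> {set V}) (S : 'I_mS -> {set V}).

(* clusters of the cluster graph, indexed by 'I_mL + 'I_mS *)
Definition cluster (c : 'I_mL + 'I_mS) : {set V} :=
  match c with inl i => L i | inr j => S j end.

Definition nclusters : nat := (mL + mS)%N.

Definition cunion (Ss : {set 'I_mL + 'I_mS}) : {set V} :=
  \bigcup_(c in Ss) cluster c.

Definition reg_pair (eps d : R) (X Y : {set V}) : Prop :=
  eps_regular eps X Y /\ (density X Y = 0 \/ d <= density X Y).

Definition is_rskew_LKS (r k eta eps d : R) : Prop :=
  [/\
      symmetric e /\ irreflexive e,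
      [/\ (forall c, cluster c != set0),
          (forall c c', c != c' -> [disjoint cluster c & cluster c'])
        & (forall v : V, exists c, v \in cluster c)],
      (1 + eta) * mS%:R <= mL%:R,
      (forall i j, #|L i| = #|L j|) /\ (forall i j, #|S i| = #|S j|)
    & [/\
      (forall i j, r * #|S j|%:R = (1 - r) * #|L i|%:R),
      (forall i j, i != j -> reg_pair eps d (L i) (L j))
                 /\ (forall i j, reg_pair eps d (L i) (S j)),
      (forall c x y, x \in cluster c -> y \in cluster c -> ~~ e x y)
                /\ (forall i j x y, i != j -> x \in S i -> y \in S j -> ~~ e x y)
    & (forall i, (1 + eta) * k <= avgdeg (L i) setT)]].

Definition typical (eps : R) (x : V) (X Y : {set V}) : bool :=
  (density X Y - eps) * #|Y|%:R <= (deg x Y)%:R.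

Definition ultratypical (eps : R) (x : V) (c : 'I_mL + 'I_mS) : Prop :=
  (#|[set c' | (c' != c) &&
      ~~ typical eps x (cluster c) (cluster c') ]|)%:R
    <= Num.sqrt eps * nclusters%:R.

End LKS.
Arguments avgdeg {R V} e A Z.
Arguments density {R V} e X Y.
Arguments is_rskew_LKS {R V} e {mL mS} L S r k eta eps d.
Arguments ultratypical {R V} e {mL mS} L S eps x c.

(* Main.v *)
Require Import Defs.
From HB Require Import structures.
From mathcomp Require Import all_boot all_order all_algebra.
From mathcomp Require Import ring lra zify.
Import Order.TTheory GRing.Theory Num.Theory.
Local Open Scope ring_scope.

Section H.
Variable R : rcfType.
Variable V : finType.
Variable e : rel V.
Variables (mL mS : nat) (L : 'I_mL -> {set V}) (S : 'I_mS -> {set V}).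
Hypothesis disj : forall c c', c != c' -> [disjoint cluster L S c & cluster L S c'].

Lemma sum_cunion (f : V -> nat) Ss :
  (\sum_(x in cunion L S Ss) f x =
   \sum_(c in Ss) \sum_(x in cluster L S c) f x)%N.
Proof.
pose G c := if c \in Ss then cluster L S c else set0.
have -> : cunion L S Ss = \bigcup_c G c by rewrite /cunion big_mkcond.
rewrite partition_disjoint_bigcup; last first.
  move=> i j ij; rewrite /G; case: (i \in Ss); case: (j \in Ss);
  try exact: disj; rewrite disjoint_subset; apply/subsetP => x; rewrite !inE //= => _; rewrite in_set0.
rewrite [RHS]big_mkcond; apply: eq_bigr => c _; rewrite /G.
by case: (c \in Ss) => //; rewrite big_set0.
Qed.

Lemma degE v Z : deg e v Z = (\sum_(y in Z) e v y)%N.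
Proof.
rewrite /deg -sum1_card big_mkcond /= [RHS]big_mkcond /=.
by apply: eq_bigr => y _; rewrite inE; case: (y \in Z); case: (e v y).
Qed.

Lemma deg_cunion v Ss : deg e v (cunion L S Ss) = (\sum_(c in Ss) deg e v (cluster L S c))%N.
Proof. by rewrite degE sum_cunion; apply: eq_bigr => c _; rewrite degE. Qed.

Lemma card_cunion Ss : #|cunion L S Ss| = (\sum_(c in Ss) #|cluster L S c|)%N.
Proof. by rewrite -sum1_card sum_cunion; apply: eq_bigr => c _; rewrite sum1_card. Qed.

Lemma nedgesE X Y : nedges e X Y = (\sum_(a in X) deg e a Y)%N.
Proof.
rewrite /nedges -sum1_card big_mkcond /=.
rewrite (eq_bigr (fun p : V * V => ((p.1 \in X) * ((p.2 \in Y) && e p.1 p.2))%N)); last first.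
  by move=> p _; rewrite inE; case: (p.1 \in X); case: (p.2 \in Y); case: (e p.1 p.2).
rewrite -(pair_big predT predT (fun a y => ((a \in X) * ((y \in Y) && e a y))%N)) /=.
rewrite [RHS]big_mkcond /=; apply: eq_bigr => a _.
case: (a \in X); last by rewrite big1 // => y _; rewrite mul0n.
rewrite degE [RHS]big_mkcond /=; apply: eq_bigr => y _.
by rewrite mul1n; case: (y \in Y).
Qed.

Lemma avgdeg_cunion A Ss : avgdeg (R:=R) e A (cunion L S Ss) = \sum_(c in Ss) avgdeg e A (cluster L S c).
Proof.
rewrite /avgdeg -mulr_suml; congr (_ / _).
rewrite -natr_sum; congr (_%:R).
rewrite (eq_bigr _ (fun a _ => deg_cunion a Ss)).
exact: exchange_big.
Qed.


Lemma avgdeg_le (A Y : {set V}) : (0 < #|A|)%N -> avgdeg (R:=R) e A Y <= #|Y|%:R.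
Proof.
move=> A0; rewrite /avgdeg ler_pdivrMr ?ltr0n // -natrM ler_nat.
rewrite mulnC -[X in (X * _)%N]sum1_card big_distrl /=.
apply: leq_sum => a _; rewrite mul1n /deg.
by apply: subset_leq_card; apply/subsetP => y; rewrite inE => /andP[].
Qed.

Lemma avgdeg_density (A Y : {set V}) : (0 < #|A|)%N -> (0 < #|Y|)%N ->
  density e A Y * #|Y|%:R = avgdeg (R:=R) e A Y.
Proof.
move=> A0 Y0; rewrite /density /avgdeg nedgesE natrM.
field; apply/andP; split; rewrite pnatr_eq0 -lt0n //.
Qed.

Lemma deg0 a (C : {set V}) : (forall y, y \in C -> ~~ e a y) -> deg e a C = 0%N.
Proof.
move=> h; rewrite degE big1 // => y yC; by rewrite (negbTE (h y yC)).
Qed.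

End H.

Lemma sqrt_bound (R : rcfType) (x : R) : x <= 1 -> x <= Num.sqrt x.
Proof.
move=> x1; have [x0|x0] := ltrP x 0.
  by apply: le_trans (sqrtr_ge0 x); apply: ltW.
have h := sqr_sqrtr x0; have h0 := sqrtr_ge0 x.
set s := Num.sqrt x in h h0 *; rewrite -h expr2 in x1 *; nra.
Qed.

Lemma sqrt_bound1 (R : rcfType) (x : R) : 1 <= x -> 1 <= Num.sqrt x.
Proof.
move=> x1; have x0 : 0 <= x by apply: le_trans x1.
have h := sqr_sqrtr x0; have h0 := sqrtr_ge0 x.
set s := Num.sqrt x in h h0 *; rewrite -h expr2 in x1 *; nra.
Qed.

Theorem proposition3p2 (R : rcfType) (V : finType) (e : rel V)
    (mL mS : nat) (L : 'I_mL -> {set V}) (S : 'I_mS -> {set V})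
    (r k eta eps d : R) :
  0 < r -> r <= 2^-1 ->
  is_rskew_LKS e L S r k eta eps d ->
  (* (1) *)
  ((forall i, (#|L i|%:R : R) <= #|V|%:R / (nclusters mL mS)%:R) /\
   (forall j, (#|S j|%:R : R) <= #|V|%:R / (r * (nclusters mL mS)%:R))) /\
  (* (2) *)
  (forall (v : V) (c : 'I_mL + 'I_mS) (Ss : {set 'I_mL + 'I_mS}),
     v \in cluster L S c ->
     ultratypical e L S eps v c ->
     avgdeg e (cluster L S c) (cunion L S Ss)
       - 2 * Num.sqrt eps * #|V|%:R / r
       <= (deg e v (cunion L S Ss))%:R).
Proof.
move=> r0 rh [[sym irr] [ne disj cov] _ [hL hS] [hiii [hLL hLS] [hin hSS] _]].
set n : R := #|V|%:R.
set N : R := (nclusters mL mS)%:R.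
have r1 : r <= 1 by apply: le_trans rh _; rewrite invf_le1 ?ler1n ?ltr0n.
have sumcl : \sum_c (#|cluster L S c|%:R : R) <= n.
  rewrite -natr_sum ler_nat.
  have := @card_cunion _ _ _ _ _ disj setT.
  rewrite (eq_bigl predT) => [<-|c]; last by rewrite inE.
  exact: max_card.
have sumN : forall t : R, (forall c, t <= #|cluster L S c|%:R) -> N * t <= n.
  move=> t ht; apply: le_trans sumcl; apply: le_trans (ler_sum _ (fun c _ => ht c)).
  rewrite sumr_const card_sum !card_ord -mulr_natr mulrC //.
have LS : forall i j, (#|L i|%:R : R) <= #|S j|%:R.
  move=> i j; have := hiii i j.
  have := ler0n R #|L i|; nra.
have P1 : forall i, N * #|L i|%:R <= n.
  move=> i; apply: sumN => -[i'|j] /=; first by rewrite (hL i' i).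
  exact: LS.
have P2 : forall j, N * (r * #|S j|%:R) <= n.
  move=> j; apply: sumN => -[i|j'] /=.
    rewrite (hiii i j); have := ler0n R #|L i|; nra.
  rewrite (hS j' j); have := ler0n R #|S j|; nra.
have Pc : forall c, r * N * #|cluster L S c|%:R <= n.
  move=> [i|j] /=; last by rewrite -mulrA mulrCA; exact: P2.
  apply: le_trans (P1 i); rewrite -mulrA ler_piMl //.
  by rewrite mulr_ge0 ?ler0n.
split.
  split.
    move=> i; have N0 : 0 < N by rewrite ltr0n /nclusters; case: i => i /= ?; lia.
    by rewrite ler_pdivlMr // mulrC.
  move=> j; have N0 : 0 < N by rewrite ltr0n /nclusters; case: j => j /= ?; lia.
  rewrite ler_pdivlMr ?mulr_gt0 //.
  have -> : #|S j|%:R * (r * N) = N * (r * #|S j|%:R) by ring.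
  exact: P2.
move=> v c Ss vc hut.
set se := Num.sqrt eps.
set C := cluster L S c.
have N0 : 0 < N.
  by rewrite ltr0n /nclusters; case: c {vc hut C} => -[i /= ?]; lia.
have C0 : (0 < #|C|)%N by rewrite card_gt0 ne.
set Bad := [set c' | (c' != c) && ~~ typical e eps v C (cluster L S c')].
have hB : (#|Bad|%:R : R) <= se * N by exact: hut.
set K := n / (r * N).
have K0 : 0 <= K by rewrite divr_ge0 ?ler0n // mulr_ge0 // ltW.
have se0 : 0 <= se := sqrtr_ge0 eps.
have claim : forall c', avgdeg e C (cluster L S c') - (deg e v (cluster L S c'))%:R
    <= se * #|cluster L S c'|%:R + (c' \in Bad)%:R * K.
  move=> c'.
  have Y0 : (0 < #|cluster L S c'|)%N by rewrite card_gt0 ne.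
  have dv0 := ler0n R (deg e v (cluster L S c')).
  case: (eqVneq c' c) => [->|nc].
    rewrite (@deg0 _ e v C); last by move=> y yC; apply: (hin c).
    rewrite /avgdeg big1 ?mul0r ?subr0; last first.
      by move=> a aC; rewrite (@deg0 _ e a C) // => y yC; apply: (hin c).
    by rewrite addr_ge0 // mulr_ge0 // ler0n.
  have hA := @avgdeg_le R _ e C (cluster L S c') C0.
  have hY : #|cluster L S c'|%:R <= K.
    by rewrite /K ler_pdivlMr ?mulr_gt0 // mulrC; exact: Pc.
  case: (boolP (c' \in Bad)) => hb.
    rewrite mul1r; have := ler0n R #|cluster L S c'|.
    have := mulr_ge0 se0 (ler0n R #|cluster L S c'|); lra.
  rewrite mul0r addr0.
  move: hb; rewrite inE nc /= negbK /typical mulrBl avgdeg_density // => ht.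
  have h1 : avgdeg e C (cluster L S c') - (deg e v (cluster L S c'))%:R
      <= eps * #|cluster L S c'|%:R by lra.
  have h2 : avgdeg e C (cluster L S c') - (deg e v (cluster L S c'))%:R
      <= (#|cluster L S c'|%:R : R) by lra.
  have := ler0n R #|cluster L S c'|.
  case: (lerP eps 1) => he.
    have := @sqrt_bound _ _ he; rewrite -/se => hs.
    move=> y0; apply: le_trans h1 _; exact: ler_wpM2r.
  have := @sqrt_bound1 _ _ (ltW he); rewrite -/se => hs.
  move=> y0; apply: le_trans h2 _; rewrite -[X in X <= _]mul1r; exact: ler_wpM2r.
rewrite (@avgdeg_cunion _ _ _ _ _ _ _ disj) (@deg_cunion _ _ _ _ _ _ disj) natr_sum.
rewrite lerBlDr addrC -lerBlDr -sumrB.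
apply: le_trans (ler_sum _ (fun c' _ => claim c')) _.
rewrite big_split /= -mulr_sumr -mulr_suml.
have S1 : \sum_(c' in Ss) (#|cluster L S c'|%:R : R) <= n.
  rewrite -natr_sum ler_nat -(@card_cunion _ _ _ _ _ disj); exact: max_card.
have S2 : \sum_(c' in Ss) ((c' \in Bad)%:R : R) <= #|Bad|%:R.
  rewrite -natr_sum ler_nat big_mkcond /= -sum1_card [X in (_ <= X)%N]big_mkcond /=.
  by apply: leq_sum => c' _; case: (c' \in Ss); case: (c' \in Bad).
have n0 : 0 <= n := ler0n R #|V|.
have hK : se * N * K = se * n / r by rewrite /K; field; rewrite gt_eqF ?lt0r_neq0 //.
have hnr : se * n <= se * n / r.
  by rewrite ler_pdivlMr // ler_piMr // mulr_ge0.
have t1 := ler_wpM2l se0 S1.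
have t2 : (\sum_(c' in Ss) ((c' \in Bad)%:R : R)) * K <= se * N * K.
  apply: ler_wpM2r => //; exact: le_trans S2 hB.
have -> : 2 * se * n / r = se * n / r + se * n / r by ring.
lra.
Qed.
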